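(* With the notation of the context, for every $\rho\in S$ the set $U(\rho)$ is nonempty and not meager with respect to the topology $\tau$; in particular $\langle H,\tau\rangle$ is a Baire space.
   Context: Work in $2^\omega$ with coordinatewise addition mod 2 (also used for finite 0-1 sequences of equal domain). Fix integers $0=n_0<n_1<n_2<\cdots$ and sets $C_i\subseteq 2^{[n_i,n_{i+1})}$ such that for every $i$ and all $s_0,\ldots,s_{n_i}\in 2^{[n_i,n_{i+1})}$ both $\bigcap_{k\le n_i}(C_i+s_k)$ and $\bigcap_{k\le n_i}((2^{[n_i,n_{i+1})}\setminus C_i)+s_k)$ are nonempty. Let $H=\{x\in 2^\omega: x\restriction[n_i,n_{i+1})\in C_i \text{ for all } i\}$. Fix a sequence $\langle P_m:m\in\omega\rangle$ of nonempty perfect subsets of $2^\omega$; let $P_m^*=\{x+y:x,y\in P_m\}$ and $T_m^*=\{x\restriction k: x\in P_m^*, k\in\omega\}$. A tree mapping with domain $n\ge1$ is a partial function $\pi$ from $\{(k,\ell):k<\ell<n\}$ to $\omega$ such that for every $0<\ell<n$ there is exactly one $k<\ell$ with $\pi(k,\ell)$ defined. A finite sequence $s$ is acceptable if ${\rm dom}(s)=n_i$ for some $i$ and $s\restriction[n_j,n_{j+1})\in C_j$ for all $j<i$. $S$ is the set of all $\rho=\langle\pi,s_0,\ldots,s_{n-1}\rangle$ where $n=n(\rho)\ge1$, $\pi$ is a tree mapping with domain $n$, the $s_j$ are acceptable with a common domain $n_i$ with $n_i\ge n$ (put $i(\rho)=i$), and $s_k+s_\ell\in T^*_{\pi(k,\ell)}$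 whenever $\pi(k,\ell)$ is defined. For $\rho=\langle\pi,s_0,\ldots,s_{n-1}\rangle\in S$, $U(\rho)$ is the set of $x_0\in H$ for which there are $x_1,\ldots,x_{n-1}\in H$ with each $s_j$ an initial segment of $x_j$ and $\langle\pi,x_0\restriction n_j,\ldots,x_{n-1}\restriction n_j\rangle\in S$ for all $j>i(\rho)$. The sets $U(\rho)$, $\rho\in S$, form a basis of a topology $\tau$ on $H$. *)

(* Defs.v *)
From HB Require Import structures.
From mathcomp Require Import all_boot all_order all_algebra.
From mathcomp Require Import boolp classical_sets functions topology cantor.

Set Implicit Arguments.
Unset Strict Implicit.
Unset Printing Implicit Defensive.

Local Open Scope classical_set_scope.

(** 2^omega is [cantor_space] (= nat -> bool with the product topology).
    Finite 0-1 sequences with domain k = {0,...,k-1} are [seq bool] of size k. *)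

Definition seqadd (s t : seq bool) : seq bool := [seq xorb p.1 p.2 | p <- zip s t].

Definition restr (x : cantor_space) (k : nat) : seq bool := mkseq (fun j => x j) k.

Section Setting.
Variable (n : nat -> nat).                 (* 0 = n_0 < n_1 < ... *)
Variable (C : nat -> set (seq bool)).      (* C i ⊆ 2^[n_i, n_{i+1}) *)
Variable (P : nat -> set cantor_space).

(** length of the block [n_i, n_{i+1}) ; an element of 2^[n_i,n_{i+1}) is
    represented by the seq of its values at n_i, n_i + 1, ..., n_{i+1} - 1 *)
Definition blen (i : nat) : nat := n i.+1 - n i.

Definition xblock (x : cantor_space) (i : nat) : seq bool :=
  mkseq (fun j => x (n i + j)) (blen i).

Definition sblock (s : seq bool) (j : nat) : seq bool :=
  drop (n j) (take (n j.+1) s).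

Definition H : set cantor_space := [set x | forall i, C i (xblock x i)].

Definition Pstar (m : nat) : set cantor_space :=
  [set z | exists x y, P m x /\ P m y /\ z = (fun j => xorb (x j) (y j))].

Definition Tstar (m : nat) : set (seq bool) :=
  [set t | exists z k, Pstar m z /\ t = restr z k].

(** tree mapping with domain N >= 1: a partial function (option-valued)
    from {(k,l) : k < l < N} to nat *)
Definition tree_mapping (pi : nat -> nat -> option nat) (N : nat) : Prop :=
  1 <= N /\
  (forall k l, pi k l <> None -> k < l < N) /\
  (forall l, 0 < l < N -> exists! k, k < l /\ pi k l <> None).

Definition acceptable (s : seq bool) : Prop :=
  exists i, size s = n i /\ forall j, j < i -> C j (sblock s j).

(** rho = <pi, s_0, ..., s_{N-1}> (with ss = [:: s_0; ...; s_{N-1}]) is in S,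
    with i(rho) = i *)
Definition inS_at (i : nat) (pi : nat -> nat -> option nat) (ss : seq (seq bool)) : Prop :=
  tree_mapping pi (size ss) /\
  (forall s, s \in ss -> acceptable s /\ size s = n i) /\
  size ss <= n i /\
  (forall k l m, pi k l = Some m ->
     Tstar m (seqadd (nth [::] ss k) (nth [::] ss l))).

Definition inS (pi : nat -> nat -> option nat) (ss : seq (seq bool)) : Prop :=
  exists i, inS_at i pi ss.

Definition U (pi : nat -> nat -> option nat) (ss : seq (seq bool)) : set cantor_space :=
  [set x0 | exists i, inS_at i pi ss /\ H x0 /\
     exists xs : nat -> cantor_space,
       xs 0 = x0 /\
       (forall l, l < size ss -> H (xs l)) /\
       (forall l, l < size ss -> restr (xs l) (size (nth [::] ss l)) = nth [::] ss l) /\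
       (forall j, i < j -> inS pi (mkseq (fun l => restr (xs l) (n j)) (size ss)))].

(** the topology tau on H generated by the basis {U(rho) : rho in S}:
    open sets are the unions of basic sets *)
Definition tau_open (A : set cantor_space) : Prop :=
  A `<=` H /\
  forall x, A x -> exists pi ss, inS pi ss /\ U pi ss x /\ U pi ss `<=` A.

Definition tau_interior (A : set cantor_space) : set cantor_space :=
  [set x | exists V, tau_open V /\ V x /\ V `<=` A].

Definition tau_closure (A : set cantor_space) : set cantor_space :=
  [set x | H x /\ forall V, tau_open V -> V x -> exists y, V y /\ A y].

Definition tau_nowhere_dense (A : set cantor_space) : Prop :=
  A `<=` H /\ tau_interior (tau_closure A) = set0.

Definition tau_meager (A : set cantor_space) : Prop :=
  A `<=` H /\
  exists F : nat -> set cantor_space,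
    (forall k, tau_nowhere_dense (F k)) /\ A `<=` \bigcup_k F k.

Definition tau_Baire : Prop :=
  forall V, tau_open V -> V !=set0 -> ~ tau_meager V.

End Setting.

(* Main.v *)
Require Import Defs.
From HB Require Import structures.
From mathcomp Require Import all_boot all_order all_algebra.
From mathcomp Require Import boolp classical_sets functions topology cantor.
From mathcomp Require Import zify.
Local Open Scope classical_set_scope.
Set Implicit Arguments.
Unset Strict Implicit.
Unset Printing Implicit Defensive.

Definition xorf (x y : cantor_space) : cantor_space := fun t => xorb (x t) (y t).

Lemma size_restr x k : size (restr x k) = k.
Proof. by rewrite /restr size_mkseq. Qed.

Lemma nth_restr x k t : (t < k)%N -> nth false (restr x k) t = x t.
Proof. by move=> h; rewrite /restr nth_mkseq. Qed.

Lemma restr_ext (x y : cantor_space) k :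
  (forall t, (t < k)%N -> x t = y t) -> restr x k = restr y k.
Proof.
move=> h; apply: (@eq_from_nth _ false); rewrite !size_restr // => t ht.
by rewrite !nth_restr // h.
Qed.

Lemma restr_eqP (x y : cantor_space) k k' :
  restr x k = restr y k' -> k = k' /\ forall t, (t < k)%N -> x t = y t.
Proof.
move=> e; have kk : k = k' by rewrite -(size_restr x k) e size_restr.
subst k'; split=> // t ht.
by rewrite -(@nth_restr x k t ht) e nth_restr.
Qed.

Lemma seqadd_restr x y k : seqadd (restr x k) (restr y k) = restr (xorf x y) k.
Proof. by rewrite /seqadd /restr /mkseq zip_map -map_comp. Qed.

Lemma nth_seqadd s t u : size s = size t ->
  nth false (seqadd s t) u = xorb (nth false s u) (nth false t u).
Proof.
move=> e; rewrite /seqadd.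
case: (ltnP u (size s)) => hu.
  by rewrite (nth_map (false,false)) ?size_zip ?e ?minnn -?e // nth_zip.
rewrite !nth_default // ?size_map ?size_zip ?e ?minnn -?e //.
Qed.

Lemma size_seqadd s t : size s = size t -> size (seqadd s t) = size s.
Proof. by move=> e; rewrite /seqadd size_map size_zip e minnn. Qed.

Lemma Tstar_prefix P m z a b : Tstar P m (restr z a) -> (b <= a)%N ->
  Tstar P m (restr z b).
Proof.
move=> [z' [k [hz e]]] hb; exists z', b; split => //.
have [ka h] := restr_eqP e; apply: restr_ext => t ht; apply: h.
exact: leq_trans ht hb.
Qed.

Lemma mkseq_ext T (f g : nat -> T) k :
  (forall j, (j < k)%N -> f j = g j) -> mkseq f k = mkseq g k.
Proof. by move=> h; apply/eq_in_map => j; rewrite mem_iota add0n; apply: h. Qed.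

Lemma xblock_ext n (x y : cantor_space) i :
  (forall t, (t < n i.+1)%N -> x t = y t) -> xblock n x i = xblock n y i.
Proof.
move=> h; rewrite /xblock; apply: mkseq_ext => j hj.
by apply: h; rewrite -ltn_subRL.
Qed.

Lemma sblockE n s j : (n j.+1 <= size s)%N -> (n j <= n j.+1)%N ->
  sblock n s j = xblock n (fun t => nth false s t) j.
Proof.
move=> h1 h2; apply: (@eq_from_nth _ false).
  by rewrite /sblock /xblock size_mkseq size_drop size_takel.
move=> u; rewrite /sblock size_drop size_takel // => hu.
rewrite nth_drop nth_take ?nth_mkseq //; by rewrite -ltn_subRL.
Qed.

Lemma nmono (n : nat -> nat) (n_incr : forall i, (n i < n i.+1)%N) j j' :
  (j <= j')%N -> (n j <= n j')%N.
Proof.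
elim: j' => [|j' IH]; first by rewrite leqn0 => /eqP ->.
rewrite leq_eqVlt => /orP [/eqP -> //|h].
exact: leq_trans (IH h) (ltnW (n_incr j')).
Qed.

Lemma nstrict (n : nat -> nat) (n_incr : forall i, (n i < n i.+1)%N) j j' :
  (j < j')%N -> (n j < n j')%N.
Proof. move=> h; exact: leq_trans (n_incr j) (nmono n_incr h). Qed.

Lemma nge (n : nat -> nat) (n_incr : forall i, (n i < n i.+1)%N) j : (j <= n j)%N.
Proof. elim: j => // j IH; exact: leq_ltn_trans IH (n_incr j). Qed.

Definition good n C P (pi : nat -> nat -> option nat) N (xs : nat -> cantor_space) :=
  tree_mapping pi N /\ (forall l, (l < N)%N -> H n C (xs l)) /\
  (forall k l m, pi k l = Some m -> forall j, Tstar P m (restr (xorf (xs k) (xs l)) j)).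

Lemma tm_lt pi N k l m : tree_mapping pi N -> pi k l = Some m -> (k < l < N)%N.
Proof. by move=> [_ [h _]] e; apply: h; rewrite e. Qed.

Lemma H_acceptable n C (n_incr : forall i, (n i < n i.+1)%N) x i :
  H n C x -> acceptable n C (restr x (n i)).
Proof.
move=> hx; exists i; split; first by rewrite size_restr.
move=> j hj; rewrite sblockE ?size_restr; last exact: ltnW (n_incr j).
  2: by apply: nmono.
rewrite (@xblock_ext _ _ x); first exact: hx.
move=> t ht; rewrite nth_restr //; exact: leq_trans ht (nmono n_incr hj).
Qed.

Lemma in_mkseq (T : eqType) (f : nat -> T) N s : s \in mkseq f N -> exists2 l, (l < N)%N & s = f l.
Proof. by move=> /mapP [l]; rewrite mem_iota add0n => hl ->; exists l. Qed.

Lemma good_inS_at n C P (n_incr : forall i, (n i < n i.+1)%N) pi N xs i :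
  good n C P pi N xs -> (N <= n i)%N ->
  inS_at n C P i pi (mkseq (fun l => restr (xs l) (n i)) N).
Proof.
move=> [tm [hH he]] hN; split; first by rewrite size_mkseq.
split.
  move=> s /in_mkseq [l hl ->]; split; first exact: H_acceptable (hH l hl).
  by rewrite size_restr.
split; first by rewrite size_mkseq.
move=> k l m e; have /andP [kl lN] := tm_lt tm e.
rewrite !nth_mkseq //; last exact: ltn_trans kl lN.
by rewrite seqadd_restr; apply: he.
Qed.

Lemma goodU' n C P (n_incr : forall i, (n i < n i.+1)%N) pi ss xs i :
  good n C P pi (size ss) xs -> inS_at n C P i pi ss ->
  (forall l, (l < size ss)%N -> restr (xs l) (n i) = nth [::] ss l) ->
  U n C P pi ss (xs 0).
Proof.
move=> g hS hr; have [tm [hH he]] := g.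
have [[N1 _] [hmem [hsz _]]] := hS.
exists i; split => //; split; first exact: hH.
exists xs; split => //; split => //; split.
  move=> l hl; have [_ ->] := hmem _ (mem_nth [::] hl); exact: hr.
move=> j hj; exists j; apply: good_inS_at => //.
exact: leq_trans hsz (nmono n_incr (ltnW hj)).
Qed.

Lemma Ugood n C P (n_incr : forall i, (n i < n i.+1)%N) pi ss x0 :
  U n C P pi ss x0 -> exists i xs, inS_at n C P i pi ss /\ xs 0 = x0 /\
    good n C P pi (size ss) xs /\
    (forall l, (l < size ss)%N -> restr (xs l) (n i) = nth [::] ss l).
Proof.
move=> [i [hS [hx0 [xs [e0 [hH [hr hj]]]]]]].
have [tm [hmem [hsz he]]] := hS.
exists i, xs; split => //; split => //; split; last first.
  move=> l hl; have [_ hs] := hmem _ (mem_nth [::] hl); by rewrite -hs hr.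
split => //; split => // k l m e j.
have /andP [kl lN] := tm_lt tm e.
have [i' [_ [_ [_ he']]]] := hj (maxn i j).+1 (leq_maxl i j).
have := he' k l m e; rewrite !nth_mkseq //; last exact: ltn_trans kl lN.
rewrite seqadd_restr => /Tstar_prefix; apply.
apply: leq_trans (nge n_incr _); exact: leq_trans (leq_maxr i j) (leqnSn _).
Qed.

Definition Qst n C P (pi : nat -> nat -> option nat) N j (xs : nat -> cantor_space) :=
  (forall l, (l < N)%N -> forall j', (j' < j)%N -> C j' (xblock n (xs l) j')) /\
  (forall k l m, pi k l = Some m -> Tstar P m (restr (xorf (xs k) (xs l)) (n j))).

Lemma step_Q n C P (n_incr : forall i, (n i < n i.+1)%N)
  (C_rich : forall i (ss : seq (seq bool)),
     size ss = (n i).+1 ->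
     (forall s, s \in ss -> size s = blen n i) ->
     (exists t, size t = blen n i /\ forall s, s \in ss -> C i (seqadd t s)) /\
     (exists t, size t = blen n i /\ forall s, s \in ss -> ~ C i (seqadd t s)))
  pi N j xs :
  tree_mapping pi N -> (N <= n j)%N -> Qst n C P pi N j xs ->
  exists xs', Qst n C P pi N j.+1 xs' /\ forall l t, (t < n j)%N -> xs' l t = xs l t.
Proof.
move=> tm hN [hC hT].
have hpz : forall l, exists pz : nat * cantor_space, (0 < l < N)%N ->
   (pz.1 < l)%N /\ exists m, pi pz.1 l = Some m /\ Pstar P m pz.2 /\
     forall t, (t < n j)%N -> pz.2 t = xorf (xs pz.1) (xs l) t.
  move=> l; case: (boolP (0 < l < N)%N) => hl; last by exists (0, xs 0).
  have [_ [_ hu]] := tm; have [k [[kl pk] _]] := hu l hl.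
  case E: (pi k l) pk => [m|] // _.
  have [z [kk [hz ez]]] := hT k l m E.
  have [ekk ht] := restr_eqP ez.
  exists (k, z) => _; split => //; exists m; split => //; split => // t tj.
  by rewrite (ht t tj).
have [pz hpz'] := choice hpz.
pose par := fun l => (pz l).1; pose zz := fun l => (pz l).2.
have upar : forall k l m, pi k l = Some m -> k = par l /\ Pstar P m (zz l) /\
    forall t, (t < n j)%N -> zz l t = xorf (xs k) (xs l) t.
  move=> k l m e; have /andP [kl lN] := tm_lt tm e.
  have hl : (0 < l < N)%N by rewrite lN (leq_ltn_trans _ kl).
  have [hp1 [m' [e' [hz ht]]]] := hpz' l hl.
  have [_ [_ hu]] := tm; have [k0 [_ hk0]] := hu l hl.
  have ek : k = (pz l).1.
    rewrite -(hk0 k) ?(hk0 (pz l).1) //; split => //; by rewrite ?e ?e'.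
  move: e'; rewrite -ek e => -[em]; subst m'; rewrite /par /zz -ek; rewrite -ek in ht; by do !split.
have hc : forall r, exists c : nat -> cantor_space, forall l, (l < r)%N ->
    (0 < l < N)%N -> c l = xorf (c (par l)) (zz l).
  elim => [|r [c hc]]; first by exists (fun _ => xs 0).
  exists (fun l0 => if l0 == r then xorf (c (par r)) (zz r) else c l0).
  move=> l hl hlN.
  have plt : (par l < l)%N by have [] := hpz' l hlN.
  rewrite ltnS leq_eqVlt in hl; case/orP: hl => [/eqP El | hl].
    subst l; by rewrite eqxx (ltn_eqF plt).
  by rewrite (ltn_eqF hl) (ltn_eqF (ltn_trans plt hl)) hc.
have [c hcN] := hc N.
have hsz : forall s, s \in mkseq (fun l => xblock n (c l) j) (n j).+1 -> size s = blen n j.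
  by move=> s /in_mkseq [l _ ->]; rewrite size_mkseq.
have [[s [hs hsC]] _] := C_rich j _ (size_mkseq _ _) hsz.
exists (fun l t => if (t < n j)%N then xs l t else xorb (nth false s (t - n j)) (c l t)).
split; last by move=> l t ->.
split.
  move=> l hl j' hj'; rewrite ltnS leq_eqVlt in hj'; case/orP: hj' => [/eqP -> | hj'].
    have -> : xblock n (fun t => if (t < n j)%N then xs l t
                else xorb (nth false s (t - n j)) (c l t)) j =
              seqadd s (xblock n (c l) j).
      apply: (@eq_from_nth _ false).
        by rewrite size_seqadd /xblock ?size_mkseq // hs.
      move=> u; rewrite /xblock size_mkseq => hu.
      rewrite nth_seqadd ?size_mkseq // !nth_mkseq // ltnNge leq_addr /=.
      by rewrite addKn.
    apply: hsC; apply/mapP; exists l => //; rewrite mem_iota add0n /=.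
    exact: leq_trans hl (leq_trans hN (leqnSn _)).
  rewrite (@xblock_ext _ _ (xs l)); first exact: hC.
  move=> t ht; have -> // : (t < n j)%N.
  exact: leq_trans ht (nmono n_incr hj').
move=> k l m e; have [ek [hz ht]] := upar k l m e.
have /andP [kl lN] := tm_lt tm e.
have hl : (0 < l < N)%N by rewrite lN (leq_ltn_trans _ kl).
exists (zz l), (n j.+1); split => //; apply: restr_ext => t _.
rewrite /xorf; case: ifP => tj; first by rewrite ht.
rewrite (hcN l lN hl) -ek /xorf.
by case: (nth false s (t - n j)); case: (c k t); case: (zz l t).
Qed.

Lemma limit_lemma (st : nat -> nat -> cantor_space) (Nf b : nat -> nat) :
  (forall r r', (r <= r')%N -> (Nf r <= Nf r')%N) ->
  (forall r r', (r <= r')%N -> (b r <= b r')%N) -> (forall r, (r < b r)%N) ->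
  (forall r l t, (l < Nf r)%N -> (t < b r)%N -> st r.+1 l t = st r l t) ->
  exists lim : nat -> cantor_space, forall r l t, (l < Nf r)%N -> (t < b r)%N ->
    lim l t = st r l t.
Proof.
move=> hN hb hbr hag.
have chain : forall r d l t, (l < Nf r)%N -> (t < b r)%N -> st (r + d) l t = st r l t.
  move=> r d l t hl ht; elim: d => [|d IH]; first by rewrite addn0.
  rewrite addnS hag ?IH //.
    exact: leq_trans hl (hN _ _ (leq_addr _ _)).
  exact: leq_trans ht (hb _ _ (leq_addr _ _)).
have hf : forall l, exists k, (exists r, (l < Nf r)%N) -> (l < Nf k)%N.
  move=> l; have [[r hr]|nh] := pselect (exists r, (l < Nf r)%N).
    by exists r.
  by exists 0 => h; case: nh.
have [f hf'] := choice hf.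
exists (fun l t => st (t.+1 + f l) l t) => r l t hl ht.
have hfl : (l < Nf (f l))%N by apply: hf'; exists r.
have hk : (l < Nf (t.+1 + f l))%N by exact: leq_trans hfl (hN _ _ (leq_addl _ _)).
have hkt : (t < b (t.+1 + f l))%N.
  exact: leq_trans (leq_addr (f l) t.+1) (ltnW (hbr _)).
case: (leqP r (t.+1 + f l)) => hr.
  by have := chain r (t.+1 + f l - r) l t hl ht; rewrite subnKC.
have := chain _ (r - (t.+1 + f l)) l t hk hkt; rewrite subnKC; last exact: ltnW.
by move=> ->.
Qed.

Lemma nshift (n : nat -> nat) (n_incr : forall i, (n i < n i.+1)%N) i r :
  (n i + r <= n (i + r))%N.
Proof.
elim: r => [|r IH]; first by rewrite !addn0.
rewrite !addnS; exact: leq_ltn_trans IH (n_incr _).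
Qed.

Lemma ninj (n : nat -> nat) (n_incr : forall i, (n i < n i.+1)%N) i j :
  n i = n j -> i = j.
Proof.
move=> e; case: (ltngtP i j) => // h.
  by have := nstrict n_incr h; rewrite e ltnn.
by have := nstrict n_incr h; rewrite e ltnn.
Qed.

Lemma inS_good n C P (n0 : n 0 = 0%N) (n_incr : forall i, (n i < n i.+1)%N)
  (C_rich : forall i (ss : seq (seq bool)),
     size ss = (n i).+1 ->
     (forall s, s \in ss -> size s = blen n i) ->
     (exists t, size t = blen n i /\ forall s, s \in ss -> C i (seqadd t s)) /\
     (exists t, size t = blen n i /\ forall s, s \in ss -> ~ C i (seqadd t s)))
  pi ss i : inS_at n C P i pi ss ->
  exists xs, good n C P pi (size ss) xs /\
    (forall l, (l < size ss)%N -> restr (xs l) (n i) = nth [::] ss l).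
Proof.
move=> hS; have [tm [hmem [hsz he]]] := hS.
set N := size ss.
pose xs0 := fun l : nat => (fun t => nth false (nth [::] ss l) t) : cantor_space.
have szl : forall l, (l < N)%N -> size (nth [::] ss l) = n i.
  by move=> l hl; have [_ ->] := hmem _ (mem_nth [::] hl).
have Q0 : Qst n C P pi N i xs0.
  split.
    move=> l hl j' hj'; have [[i1 [e1 hc]] e2] := hmem _ (mem_nth [::] hl).
    have ei : i1 = i by apply: (ninj n_incr); rewrite -e1.
    subst i1; rewrite -sblockE; first exact: hc.
      by rewrite e1; apply: nmono.
    exact: ltnW (n_incr _).
  move=> k l m e; have /andP [kl lN] := tm_lt tm e.
  have kN : (k < N)%N by exact: ltn_trans kl lN.
  suff -> : restr (xorf (xs0 k) (xs0 l)) (n i) = seqadd (nth [::] ss k) (nth [::] ss l).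
    exact: he e.
  apply: (@eq_from_nth _ false); first by rewrite size_restr size_seqadd ?szl.
  move=> u; rewrite size_restr => hu.
  by rewrite nth_restr // nth_seqadd ?szl.
have hN1 : (1 <= N)%N by case: tm.
have i0 : (0 < i)%N.
  case: i hmem hsz {Q0 szl hS} => // _; rewrite n0 => h.
  by have := leq_trans hN1 h.
have hstep : forall p : nat * (nat -> cantor_space), exists xs',
    Qst n C P pi N p.1 p.2 -> (N <= n p.1)%N ->
    Qst n C P pi N p.1.+1 xs' /\ forall l t, (t < n p.1)%N -> xs' l t = p.2 l t.
  move=> [j xs] /=.
  have [[hq hn]|nh] := pselect (Qst n C P pi N j xs /\ (N <= n j)%N).
    have [xs' hxs'] := step_Q n_incr C_rich tm hn hq.
    by exists xs'.
  by exists xs => a b; case: nh.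
have [f hf] := choice hstep.
pose st := fix st r := match r with 0 => xs0 | r'.+1 => f (i + r', st r') end.
have hst : forall r, Qst n C P pi N (i + r) (st r) /\
    forall l t, (t < n (i + r))%N -> st r.+1 l t = st r l t.
  elim => [|r [hq _]].
    rewrite addn0; split => //.
    move=> l t ht; have := hf (i, xs0); rewrite /= => h.
    rewrite /= addn0; have [_ ->] := h Q0 hsz; by rewrite // -(addn0 i).
  have hn : forall r, (N <= n (i + r))%N.
    by move=> r'; exact: leq_trans hsz (nmono n_incr (leq_addr _ _)).
  have [hq' _] := hf (i + r, st r) hq (hn r).
  have hq2 : Qst n C P pi N (i + r.+1) (st r.+1) by rewrite addnS.
  split => //.
  move=> l t ht; have := hf (i + r.+1, st r.+1); rewrite /= => h.
  have [_ q2] := h hq2 (hn r.+1).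
  exact: q2.
have [lim hlim] : exists lim : nat -> cantor_space, forall r l t, (l < N)%N ->
    (t < n (i + r))%N -> lim l t = st r l t.
  apply: (@limit_lemma st (fun _ => N) (fun r => n (i + r))) => //.
  - by move=> r r' h; apply: (nmono n_incr); rewrite leq_add2l.
  - move=> r; apply: leq_trans (nshift n_incr i r).
    rewrite -addn1 addnC leq_add2r.
    exact: leq_trans hN1 hsz.
  - by move=> r l t _ ht; have [_ ->] := hst r.
exists lim; split.
  split => //; split.
    move=> l hl j; have [[hq _] _] := hst j.+1.
    rewrite (@xblock_ext _ _ (st j.+1 l)).
      apply: hq => //; by rewrite addnS ltnS leq_addl.
    move=> t ht; apply: hlim => //.
    apply: leq_trans ht (nmono n_incr _); by rewrite addnS ltnS leq_addl.
  move=> k l m e j; have /andP [kl lN] := tm_lt tm e.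
  have kN : (k < N)%N by exact: ltn_trans kl lN.
  have [[_ hq] _] := hst j.
  apply: (@Tstar_prefix _ _ _ (n (i + j))).
    rewrite (@restr_ext _ (xorf (st j k) (st j l))); first exact: hq e.
    by move=> t ht; rewrite /xorf !(hlim j).
  apply: leq_trans (nge n_incr _); exact: leq_addl.
move=> l hl; rewrite (@restr_ext _ (xs0 l)).
  by rewrite /restr /xs0 -(szl l hl) mkseq_nth.
move=> t ht; rewrite (hlim 0) //; by rewrite addn0.
Qed.

Definition comb_pi N (pi pi2 : nat -> nat -> option nat) k l :=
  if (l < N)%N then pi k l else if k == 0 then pi2 0 (l - N).+1
  else if (N <= k)%N then pi2 (k - N).+1 (l - N).+1 else None.

Definition node2 N l2 := if l2 == 0 then 0 else N + l2.-1.

Lemma node2_big N l2 : (0 < l2)%N -> node2 N l2 = N + l2.-1.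
Proof. by case: l2. Qed.

Lemma comb_node N pi pi2 k2 l2 : (0 < N)%N -> (0 < l2)%N ->
  comb_pi N pi pi2 (node2 N k2) (node2 N l2) = pi2 k2 l2.
Proof.
move=> hN hl; rewrite /comb_pi node2_big //.
have -> : (N + l2.-1 < N)%N = false by lia.
have -> : (N + l2.-1 - N).+1 = l2 by lia.
case: k2 => [|k2] //; rewrite node2_big //=.
have -> : (N + k2 == 0) = false by lia.
have -> : (N <= N + k2)%N by lia.
by congr pi2; lia.
Qed.

Lemma comb_inv N pi pi2 k l : (N <= l)%N -> comb_pi N pi pi2 k l <> None ->
  exists k2, k = node2 N k2 /\ pi2 k2 (l - N).+1 <> None.
Proof.
rewrite /comb_pi => hl; have -> : (l < N)%N = false by lia.
case: eqP => [-> h|k0]; first by exists 0.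
case: ifP => // hk h; exists (k - N).+1; split => //.
rewrite /node2 /=; lia.
Qed.

Lemma node2_inv N l : (N <= l)%N -> l = node2 N (l - N).+1.
Proof. rewrite /node2 /= => h; lia. Qed.

Lemma comb_tm N N2 pi pi2 : tree_mapping pi N -> tree_mapping pi2 N2 ->
  tree_mapping (comb_pi N pi pi2) (N + N2.-1).
Proof.
move=> [h1 [b1 u1]] [h2 [b2 u2]]; split; first lia.
split.
  move=> k l; case: (ltnP l N) => hl.
    rewrite /comb_pi hl => /b1; lia.
  move=> /(comb_inv hl) [k2 [-> hk2]].
  have := b2 _ _ hk2; rewrite /node2; case: eqP => /=; lia.
move=> l hl; case: (ltnP l N) => hlN.
  have [k [[kl pk] uk]] := u1 l ltac:(lia).
  exists k; split; first by rewrite /comb_pi hlN.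
  by move=> k' [k'l]; rewrite /comb_pi hlN => pk'; apply: uk.
set l2 := (l - N).+1.
have [k2 [[kl pk] uk]] := u2 l2 ltac:(lia).
exists (node2 N k2); split.
  split.
    rewrite (node2_inv hlN) /node2 -/l2 /=.
    case: eqP => /=; lia.
  rewrite {1}(node2_inv hlN) -/l2 comb_node //; lia.
move=> k' [k'l] pk'; have [k2' [ek hk2']] := comb_inv hlN pk'.
subst k'; congr node2; apply: uk; split => //.
move: k'l; rewrite /node2 /l2; case: eqP => /=; lia.
Qed.

Lemma U_H n C P pi ss x : U n C P pi ss x -> H n C x.
Proof. by move=> [i [_ [hx _]]]. Qed.

Lemma U_open n C P pi ss : tau_open n C P (U n C P pi ss).
Proof.
split; first by move=> x /U_H.
move=> x hx; exists pi, ss; split; last by split.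
by have [i [hS _]] := hx; exists i.
Qed.

Lemma fusion_step n C P (n_incr : forall i, (n i < n i.+1)%N) pi N i xs F :
  good n C P pi N xs -> (N <= n i)%N -> tau_nowhere_dense n C P F ->
  exists pi' N' i' xs', good n C P pi' N' xs' /\ (N' <= n i')%N /\ (N <= N')%N /\
    (i < i')%N /\
    (forall l t, (l < N)%N -> (t < n i)%N -> xs' l t = xs l t) /\
    (forall k l, (l < N)%N -> pi' k l = pi k l) /\
    (forall y, U n C P pi' (mkseq (fun l => restr (xs' l) (n i')) N') y -> ~ F y).
Proof.
move=> g hNi [FH hint].
set ss := mkseq (fun l => restr (xs l) (n i)) N.
have hS := good_inS_at n_incr g hNi.
have szss : size ss = N by rewrite size_mkseq.
have V0 : U n C P pi ss (xs 0).
  apply: goodU' hS _ => //; first by rewrite szss.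
  by move=> l hl; rewrite nth_mkseq // -szss.
have [x [Vx ncl]] : exists x, U n C P pi ss x /\ ~ tau_closure n C P F x.
  apply: contrapT => nh.
  have : tau_interior n C P (tau_closure n C P F) (xs 0).
    exists (U n C P pi ss); split; first exact: U_open.
    split => // y Vy; apply: contrapT => ny; apply: nh; by exists y.
  by rewrite hint.
have [W [oW [Wx nWF]]] : exists W, tau_open n C P W /\ W x /\ forall y, W y -> ~ F y.
  apply: contrapT => nh; apply: ncl; split; first exact: U_H Vx.
  move=> W oW Wx; apply: contrapT => h2; apply: nh; exists W; do 2!split => //.
  by move=> y Wy Fy; apply: h2; exists y.
have [_ hb] := oW.
have [pi2 [ss2 [_ [U2x U2W]]]] := hb x Wx.
have [i1 [xs1 [_ [e1 [g1 hr1]]]]] := Ugood n_incr Vx.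
have [i2 [xs2 [hS2 [e2 [g2 hr2]]]]] := Ugood n_incr U2x.
rewrite szss in g1 hr1.
have ag1 : forall l t, (l < N)%N -> (t < n i)%N -> xs1 l t = xs l t.
  move=> l t hl ht; have := hr1 l hl; rewrite nth_mkseq // => /restr_eqP [e h].
  by apply: h; rewrite e.
set N2 := size ss2.
have [tm1 [H1 E1]] := g1; have [tm2 [H2 E2]] := g2.
have N0 : (0 < N)%N by case: tm1.
have N20 : (0 < N2)%N by case: tm2.
pose N' := N + N2.-1.
pose pi' := comb_pi N pi pi2.
pose xs' := fun l => if (l < N)%N then xs1 l else xs2 (l - N).+1.
pose i' := (maxn (maxn i i2) N').+1.
have hxs'node : forall l2, (l2 < N2)%N -> xs' (node2 N l2) = xs2 l2.
  move=> l2 hl2; rewrite /xs' /node2; case: eqP => [->|/eqP l20].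
    by rewrite N0 e1 e2.
  have -> : (N + l2.-1 < N)%N = false by lia.
  congr xs2; lia.
exists pi', N', i', xs'.
split.
  split; first exact: comb_tm.
  split.
    move=> l hl; rewrite /xs'; case: ifP => hlN; first exact: H1.
    apply: H2; rewrite /N2; lia.
  move=> k l m e j; case: (ltnP l N) => hlN.
    move: e; rewrite /pi' /comb_pi hlN => e.
    have /andP [kl _] := tm_lt tm1 e.
    rewrite /xs' hlN (ltn_trans kl hlN). exact: (E1 k l m e j).
  have hne : comb_pi N pi pi2 k l <> None by rewrite -/pi' e.
  have [k2 [ek _]] := comb_inv hlN hne.
  move: e; rewrite /pi' ek (node2_inv hlN) comb_node //.
  move=> e; have /andP [_ l2N] := tm_lt tm2 e.
  have /andP [k2l _] := tm_lt tm2 e.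
  rewrite !hxs'node //. exact: (E2 _ _ _ e j). exact: ltn_trans k2l l2N.
split; first by apply: leq_trans (nge n_incr _); rewrite /i'; lia.
split; first by rewrite /N'; lia.
split; first by rewrite /i'; lia.
split; first by move=> l t hl ht; rewrite /xs' hl ag1.
split; first by move=> k l hl; rewrite /pi' /comb_pi hl.
move=> y Uy; apply: nWF; apply: U2W.
have [i3 [xs3 [_ [e3 [g3 hr3]]]]] := Ugood n_incr Uy.
rewrite size_mkseq in g3 hr3.
have ag3 : forall l t, (l < N')%N -> (t < n i')%N -> xs3 l t = xs' l t.
  move=> l t hl ht; have := hr3 l hl; rewrite nth_mkseq // => /restr_eqP [e h].
  by apply: h; rewrite e.
have [tm3 [H3 E3]] := g3.
have nN' : forall l2, (l2 < N2)%N -> (node2 N l2 < N')%N.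
  by move=> l2 hl2; rewrite /node2 /N'; case: eqP; lia.
pose xs4 := fun l2 => xs3 (node2 N l2).
have -> : y = xs4 0 by rewrite /xs4 /node2 /= e3.
apply: (goodU' n_incr _ hS2).
  split => //; split.
    by move=> l2 hl2; apply: H3; apply: nN'.
  move=> k2 l2 m e j; have /andP [k2l l2N] := tm_lt tm2 e.
  apply: E3; rewrite /pi' comb_node //; exact: leq_ltn_trans _ k2l.
move=> l2 hl2; rewrite -hr2 //; apply: restr_ext => t ht.
rewrite /xs4 ag3 ?nN' ?hxs'node //.
apply: leq_trans ht (ltnW (nstrict n_incr _)); rewrite /i'; lia.
Qed.

Definition state := ((nat -> nat -> option nat) * nat * (nat * (nat -> cantor_space)))%type.

Definition rho_of n (s : state) := mkseq (fun l => restr (s.2.2 l) (n s.2.1)) s.1.2.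

Lemma not_meager n C P (n0 : n 0 = 0%N) (n_incr : forall i, (n i < n i.+1)%N)
  pi N i xs : good n C P pi N xs -> (N <= n i)%N ->
  ~ tau_meager n C P (U n C P pi (mkseq (fun l => restr (xs l) (n i)) N)).
Proof.
move=> g0 hN0 [_ [F [hF cov]]].
pose Inv (s : state) := good n C P s.1.1 s.1.2 s.2.2 /\ (s.1.2 <= n s.2.1)%N.
pose Step r (s s' : state) := Inv s' /\ (s.1.2 <= s'.1.2)%N /\ (s.2.1 < s'.2.1)%N /\
    (forall l t, (l < s.1.2)%N -> (t < n s.2.1)%N -> s'.2.2 l t = s.2.2 l t) /\
    (forall k l, (l < s.1.2)%N -> s'.1.1 k l = s.1.1 k l) /\
    (forall y, U n C P s'.1.1 (rho_of n s') y -> ~ F r y).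
have hstep : forall p : nat * state, exists s', Inv p.2 -> Step p.1 p.2 s'.
  move=> [r [[pi1 N1] [i1 xs1]]] /=.
  have [[g1 h1]|nh] := pselect (Inv ((pi1, N1), (i1, xs1))); last first.
    by exists ((pi1, N1), (i1, xs1)).
  have [pi' [N' [i' [xs' [g' [h1' [h2 [h3 [h4 [h5 h6]]]]]]]]]] :=
    fusion_step n_incr g1 h1 (hF r).
  exists ((pi', N'), (i', xs')) => _.
  exact: (conj (conj g' h1') (conj h2 (conj h3 (conj h4 (conj h5 h6))))).
have [f hf] := choice hstep.
pose s0 : state := ((pi, N), (i, xs)).
pose st := fix st r := match r with 0 => s0 | r'.+1 => f (r', st r') end.
have hst : forall r, Inv (st r) /\ Step r (st r) (st r.+1).
  elim => [|r [hi hs]]; first by split; [split | apply: hf].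
  have hi' : Inv (st r.+1) by case: hs.
  by split => //; apply: hf.
pose Nf r := (st r).1.2; pose ii r := (st r).2.1; pose xf r := (st r).2.2.
pose pif r := (st r).1.1.
have Nmono : forall r d, (Nf r <= Nf (r + d))%N.
  move=> r; elim => [|d IH]; first by rewrite addn0.
  apply: leq_trans IH _; rewrite addnS; by have [_ [_ [? _]]] := hst (r + d).
have iinc : forall r, (ii r < ii r.+1)%N by move=> r; have [_ [_ [_ [? _]]]] := hst r.
have ii0 : (0 < ii 0)%N.
  rewrite /ii /=; have N1 : (1 <= N)%N by have [[]] := g0.
  case: (posnP i) => [i0|//]; move: hN0; rewrite i0 n0; lia.
have iige : forall r, (r < ii r)%N.
  move=> r; have := nshift iinc 0 r; rewrite add0n; lia.
have pimono : forall r d k l, (l < Nf r)%N -> pif (r + d) k l = pif r k l.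
  move=> r d k l hl; elim: d => [|d IH]; first by rewrite addn0.
  rewrite addnS -IH; have [_ [_ [_ [_ [_ [h _]]]]]] := hst (r + d); apply: h.
  exact: leq_trans hl (Nmono r d).
have [lim hlim] : exists lim : nat -> cantor_space, forall r l t, (l < Nf r)%N ->
    (t < n (ii r))%N -> lim l t = xf r l t.
  apply: (@limit_lemma xf Nf (fun r => n (ii r))).
  - by move=> r r' h; rewrite -(subnKC h); apply: Nmono.
  - move=> r r' h; apply: (nmono n_incr); rewrite -(subnKC h).
    have := nshift iinc r (r' - r); lia.
  - move=> r; apply: leq_trans (iige r) (nge n_incr _).
  - by move=> r l t hl ht; have [_ [_ [_ [_ [h _]]]]] := hst r; apply: h.
have Ur : forall r, U n C P (pif r) (rho_of n (st r)) (lim 0).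
  move=> r; have [[tm [hH hE]] hNr] := (hst r).1.
  have g : good n C P (pif r) (Nf r) lim.
    split => //; split.
      move=> l hl j; pose r' := r + n j.+1.
      have [[_ [hH' _]] _] := (hst r').1.
      rewrite (@xblock_ext _ _ (xf r' l)).
        apply: hH'; exact: leq_trans hl (Nmono r _).
      move=> t ht; apply: hlim; first exact: leq_trans hl (Nmono r _).
      apply: leq_trans ht _; apply: leq_trans _ (nge n_incr _).
      apply: leq_trans _ (ltnW (iige r')); exact: leq_addl.
    move=> k l m e j; have /andP [kl lN] := tm_lt tm e.
    pose r' := r + j.
    have [[_ [_ hE']] _] := (hst r').1.
    have e' : pif r' k l = Some m by rewrite pimono.
    rewrite (@restr_ext _ (xorf (xf r' k) (xf r' l))); first exact: (hE' _ _ _ e' j).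
    move=> t ht.
    have ht' : (t < n (ii r'))%N.
      apply: leq_trans ht _; apply: leq_trans _ (nge n_incr _).
      apply: leq_trans _ (ltnW (iige r')); exact: leq_addl.
    have lN' : (l < Nf r')%N by exact: leq_trans lN (Nmono r j).
    have kN' : (k < Nf r')%N by exact: leq_trans (ltn_trans kl lN) (Nmono r j).
    by rewrite /xorf !(hlim r').
  apply: (goodU' n_incr); first by rewrite /rho_of size_mkseq.
  - exact: (good_inS_at n_incr (conj tm (conj hH hE)) hNr).
  - move=> l; rewrite /rho_of size_mkseq => hl; rewrite nth_mkseq //.
    by apply: restr_ext => t ht; apply: hlim.
have [k _ Fk] := cov _ (Ur 0).
have [_ [_ [_ [_ [_ [_ h]]]]]] := hst k.
exact: h _ (Ur k.+1) Fk.
Qed.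
Unset Implicit Arguments.

Theorem proposition2p6
  (n : nat -> nat) (C : nat -> set (seq bool)) (P : nat -> set cantor_space)
  (n0 : n 0 = 0%N)
  (n_incr : forall i, (n i < n i.+1)%N)
  (C_sub : forall i s, C i s -> size s = blen n i)
  (C_rich : forall i (ss : seq (seq bool)),
     size ss = (n i).+1 ->
     (forall s, s \in ss -> size s = blen n i) ->
     (exists t, size t = blen n i /\ forall s, s \in ss -> C i (seqadd t s)) /\
     (exists t, size t = blen n i /\ forall s, s \in ss -> ~ C i (seqadd t s)))
  (P_perfect : forall m, perfect_set (P m))
  (P_nonempty : forall m, P m !=set0) :
  (forall pi ss, inS n C P pi ss ->
     U n C P pi ss !=set0 /\ ~ tau_meager n C P (U n C P pi ss)) /\
  tau_Baire n C P.
Proof.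
have part1 : forall pi ss, inS n C P pi ss ->
     U n C P pi ss !=set0 /\ ~ tau_meager n C P (U n C P pi ss).
  move=> pi ss [i hS].
  have [xs [g hr]] := inS_good n0 n_incr C_rich hS.
  have [_ [_ [hsz _]]] := hS.
  have ess : ss = mkseq (fun l => restr (xs l) (n i)) (size ss).
    apply: (@eq_from_nth _ [::]); first by rewrite size_mkseq.
    by move=> l hl; rewrite nth_mkseq // hr.
  split; first by exists (xs 0); apply: (goodU' n_incr g hS hr).
  rewrite ess; exact: (not_meager n0 n_incr g hsz).
split => //.
move=> V [_ hb] [x Vx] [_ [F [hF cov]]].
have [pi [ss [hS [Ux UV]]]] := hb x Vx.
have [_ nm] := part1 pi ss hS; apply: nm.
split; first by move=> y /U_H.
exists F; split => //; move=> y Uy; exact: cov _ (UV _ Uy).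
Qed.
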